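(* Let $G=K_{r_1,\dots,r_k}$ with $|V(G)|$ odd and partition sets $X_1,\dots,X_k$, and let $H$ be a good bisection of $G$ with partition sets $V_1,V_2$ such that $|V_1|=|V_2|+1$. Let $\mathcal X_0'$ be the set of those $X_i$ that cross $H$, have $|X_i|$ even, and satisfy $\big||X_i\cap V_1|-|X_i\cap V_2|\big|=2$; let $\mathcal X_1$ be the set of those $X_i$ that cross $H$ and have $|X_i|$ odd. Let $W_1=\bigcup_{X_i\in\mathcal X_1}X_i$, $W_0=\bigcup_{X_i\in\mathcal X_0'}X_i$, $t=|\mathcal X_1|$, $t'=|\mathcal X_0'|$. Then (i) $|W_1\cap V_1|-|W_1\cap V_2|=t$; (ii) $|W_0\cap V_1|-|W_0\cap V_2|=2t'$; (iii) $|\overline{W_1\cup W_0}\cap V_1|-|\overline{W_1\cup W_0}\cap V_2|=-(t+2t'-1)$.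
   Context: A bisection of a graph $G$ is a bipartite spanning subgraph $H$ of $G$ with partition sets $V_1,V_2$ (every edge of $H$ joins $V_1$ and $V_2$) with $||V_1|-|V_2||\le 1$. It is good if $2d_H(v)\ge d_G(v)-1$ for every $v\in V(G)$. For $W\subseteq V(G)$, $\overline{W}=V(G)\setminus W$. A partition set $X_i$ crosses $H$ if $X_i\cap V_1\neq\emptyset$ and $X_i\cap V_2\ne\emptyset$. *)

(* Defs.v *)
From HB Require Import structures.
From mathcomp Require Import all_boot all_order all_algebra.
Set Implicit Arguments. Unset Strict Implicit. Unset Printing Implicit Defensive.
Import Order.TTheory GRing.Theory Num.Theory.

Section Defs.
Variable T : finType.

(* Complete multipartite graph K_{r_1,...,r_k} on vertex set T, given by the
   part map p : T -> 'I_k; partition set X_i = part p i. *)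
Definition part (k : nat) (p : T -> 'I_k) (i : 'I_k) : {set T} := [set v | p v == i].
Definition mp_adj (k : nat) (p : T -> 'I_k) : rel T := fun u v => p u != p v.

Definition degree (e : rel T) (v : T) : nat := #|[set u | e v u]|.

Definition is_bisection (G H : rel T) (V1 V2 : {set T}) : Prop :=
  [/\ (forall u v, H u v -> G u v),
      (forall u v, H u v = H v u),
      (forall u v, H u v ->
          (u \in V1 /\ v \in V2) \/ (u \in V2 /\ v \in V1)),
      V1 :&: V2 = set0 /\ V1 :|: V2 = setT &
      (Num.norm (#|V1|%:Z - #|V2|%:Z) <= 1)%R].

Definition good_bisection (G H : rel T) (V1 V2 : {set T}) : Prop :=
  is_bisection G H V1 V2 /\
  forall v, ((degree G v)%:Z - 1 <= 2 * (degree H v)%:Z)%R.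

Definition crosses (X V1 V2 : {set T}) : bool :=
  (X :&: V1 != set0) && (X :&: V2 != set0).
End Defs.

(* Main.v *)
Require Import Defs.
From HB Require Import structures.
From mathcomp Require Import all_boot all_order all_algebra.
From mathcomp Require Import zify.
Import Order.TTheory GRing.Theory Num.Theory.

Section Aux.
Variables (T : finType) (k : nat) (p : T -> 'I_k).

Lemma mem_bigpart (S : {set 'I_k}) x :
  (x \in \bigcup_(i in S) part p i) = (p x \in S).
Proof.
apply/bigcupP/idP => [[i iS]|h]; first by rewrite inE => /eqP ->.
by exists (p x) => //; rewrite inE.
Qed.

Lemma card_bigpart (S : {set 'I_k}) (A : {set T}) :
  #|(\bigcup_(i in S) part p i) :&: A| = \sum_(i in S) #|part p i :&: A|.
Proof.
rewrite -sum1_card (partition_big p (mem S)) /=; last first.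
  by move=> x; rewrite inE mem_bigpart => /andP[].
apply: eq_bigr => j jS; rewrite -sum1_card; apply: eq_bigl => x.
rewrite !inE mem_bigpart.
case: (p x =P j) => [e|]; last by rewrite !andbF.
by rewrite e jS /= !andbT.
Qed.

Lemma card_split (X : {set T}) (V1 V2 : {set T}) :
  V1 :&: V2 = set0 -> V1 :|: V2 = setT ->
  #|X| = (#|X :&: V1| + #|X :&: V2|)%N.
Proof.
move=> dis cov; rewrite -cardsUI -setIUr cov setIT.
have -> : X :&: V1 :&: (X :&: V2) = set0.
  by rewrite setIACA setIid dis setI0.
by rewrite cards0 addn0.
Qed.
End Aux.

Local Open Scope ring_scope.

Theorem lemma3p2 (T : finType) (k : nat) (p : T -> 'I_k)
  (Hpart : forall i : 'I_k, (0 < #|part p i|)%N)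
  (Hodd : odd #|T|)
  (H : rel T) (V1 V2 : {set T})
  (Hgood : good_bisection (mp_adj p) H V1 V2)
  (Hsize : #|V1| = (#|V2| + 1)%N) :
  let X0' := [set i : 'I_k | [&& crosses (part p i) V1 V2,
                 ~~ odd #|part p i| &
                 (Num.norm (#|part p i :&: V1|%:Z - #|part p i :&: V2|%:Z)%R == 2%:Z)]] in
  let X1 := [set i : 'I_k | crosses (part p i) V1 V2 && odd #|part p i|] in
  let W1 := \bigcup_(i in X1) part p i in
  let W0 := \bigcup_(i in X0') part p i in
  let t := #|X1| in
  let t' := #|X0'| in
  [/\ (#|W1 :&: V1|%:Z - #|W1 :&: V2|%:Z = t%:Z)%R,
      (#|W0 :&: V1|%:Z - #|W0 :&: V2|%:Z = 2 * t'%:Z)%R &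
      (#|~: (W1 :|: W0) :&: V1|%:Z - #|~: (W1 :|: W0) :&: V2|%:Z
         = - (t%:Z + 2 * t'%:Z - 1))%R].
Proof.
move=> X0' X1 W1 W0 t t'.
case: Hgood => [[HG Hsym Hside [Hdis Hcov] _] Hdeg].
have cT : #|T| = (#|V1| + #|V2|)%N.
  by rewrite -cardsT (@card_split T [set: T] _ _ Hdis Hcov) !setTI.
have degG v : degree (mp_adj p) v = (#|T| - #|part p (p v)|)%N.
  rewrite /degree (_ : [set u | _] = ~: part p (p v)); last first.
    by apply/setP => u; rewrite !inE /mp_adj eq_sym.
  by rewrite cardsCs setCK.
have leX v : (#|part p (p v)| <= #|T|)%N by apply: max_card.
have deg1 v : v \in V1 -> (degree H v <= #|V2| - #|part p (p v) :&: V2|)%N.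
  move=> vV1; rewrite /degree setIC -cardsD; apply: subset_leq_card.
  apply/subsetP => u; rewrite !inE => Hvu.
  have := HG _ _ Hvu; rewrite /mp_adj => ne.
  case: (Hside _ _ Hvu) => [[_ ->]|[vV2 _]]; first by rewrite andbT eq_sym.
  have : v \in V1 :&: V2 by rewrite inE vV1 vV2.
  by rewrite Hdis inE.
have deg2 v : v \in V2 -> (degree H v <= #|V1| - #|part p (p v) :&: V1|)%N.
  move=> vV2; rewrite /degree setIC -cardsD; apply: subset_leq_card.
  apply/subsetP => u; rewrite !inE => Hvu.
  have := HG _ _ Hvu; rewrite /mp_adj => ne.
  case: (Hside _ _ Hvu) => [[vV1 _]|[_ ->]]; last by rewrite andbT eq_sym.
  have : v \in V1 :&: V2 by rewrite inE vV1 vV2.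
  by rewrite Hdis inE.
have key i : crosses (part p i) V1 V2 ->
  (#|part p i :&: V2| <= #|part p i :&: V1| <= #|part p i :&: V2| + 2)%N.
  case/andP => /set0Pn [v1 /setIP[v1i v1V1]] /set0Pn [v2 /setIP[v2i v2V2]].
  move: v1i v2i; rewrite !inE => /eqP e1 /eqP e2.
  have s := @card_split T (part p i) _ _ Hdis Hcov.
  have l1 : (#|part p i :&: V1| <= #|V1|)%N by apply/subset_leq_card/subsetIr.
  have l2 : (#|part p i :&: V2| <= #|V2|)%N by apply/subset_leq_card/subsetIr.
  have h1 := Hdeg v1; have h2 := Hdeg v2.
  have d1 := deg1 _ v1V1; have d2 := deg2 _ v2V2.
  rewrite !degG in h1 h2; rewrite e1 in d1 h1; rewrite e2 in d2 h2.
  apply/andP; split; lia.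
have dX : W1 :&: W0 = set0.
  apply/setP => x; rewrite !inE !mem_bigpart !inE.
  by apply/negP => /andP[/andP[_ o] /and3P[_ no _]]; rewrite o in no.
have i1 : (#|W1 :&: V1| = #|W1 :&: V2| + t)%N.
  rewrite !card_bigpart /t -sum1_card -big_split /=.
  apply: eq_bigr => i; rewrite inE => /andP[c o].
  have := key i c; have := @card_split T (part p i) _ _ Hdis Hcov.
  move: o; set a := #|part p i|; set a1 := #|_ :&: V1|; set a2 := #|_ :&: V2|.
  move=> o e b.
  have : odd a = odd (a1 + a2) by rewrite e.
  rewrite oddD o; case/andP: b => b1 b2.
  have [->|[->|->]] : a1 = a2 \/ a1 = a2.+1 \/ a1 = a2.+2 by lia.
  - by rewrite addbb.
  - by rewrite addn1.
  - by rewrite !oddS negbK addbb.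
have i0 : (#|W0 :&: V1| = #|W0 :&: V2| + 2 * t')%N.
  rewrite !card_bigpart /t' mulnC -sum_nat_const -big_split /=.
  apply: eq_bigr => i; rewrite inE => /and3P[c _ n2].
  have := key i c; move: n2.
  set a1 := #|_ :&: V1|; set a2 := #|_ :&: V2| => n2 b.
  have : a1%:Z - a2%:Z = 2.
    by move/eqP: n2; rewrite ger0_norm // subr_ge0 lez_nat; case/andP: b.
  lia.
have cU A : #|(W1 :|: W0) :&: A| = (#|W1 :&: A| + #|W0 :&: A|)%N.
  rewrite setIUl -cardsUI.
  have -> : W1 :&: A :&: (W0 :&: A) = set0.
    by rewrite setIACA dX set0I.
  by rewrite cards0 addn0.
have cC A : #|~: (W1 :|: W0) :&: A| = (#|A| - #|(W1 :|: W0) :&: A|)%N.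
  by rewrite setIC -setDE cardsD setIC.
have lA A : (#|(W1 :|: W0) :&: A| <= #|A|)%N.
  by apply/subset_leq_card/subsetIr.
have := lA V1; have := lA V2.
rewrite !cC !cU => la lb.
split; lia.
Qed.
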